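(* For every prime $p$: (i) $\{(r,e,d)\in\mathscr{U}(p)\mid d=r\}=\mathscr{B}_+(p)$; (ii) $\{(r,e,d)\in\mathscr{U}(p)\mid d=r-1\}=\mathscr{B}_0(p)$; (iii) $\{(r,e,d)\in\mathscr{U}(p)\mid r=2\}=\{(r,e,d)\in\mathscr{B}(p)\mid r=2\}$.
   Context: Let $p$ be a prime. For integer triples $(r,e,d)$ put $g=\left\{red-\frac{d(d+1)}{2}(p-1)\right\}\big/\frac{r(r-1)}{2}\in\mathbb{Q}$. $\mathscr{U}(p)$ is the set of integer triples $(r,e,d)$ with $r\ge2$, $e\ge1$, $1\le d\le p$, $d(p-1)\le re\le r(p-1)$, $g>0$, and $g\in2\mathbb{Z}$ if $p\ne2$, $g\in\mathbb{Z}$ if $p=2$. $\mathscr{B}(p)=\mathscr{B}_+(p)\cup\mathscr{B}_0(p)\cup\mathscr{B}_-(p)$ where $\mathscr{B}_+(p)=\{(r,e,d): 2\le r\le p,\ e=p-1,\ d=r\}$, $\mathscr{B}_0(p)=\{(r,e,d): 2\le r\le p+1,\ (p-1)/2<e\le p-1,\ r(p-1-e)\le p-1,\ d=r-1\}$, $\mathscr{B}_-(p)=\{(r,e,d): r\ge2,\ (p-1)/2<e\le p-1,\ r(p-1-e)=p-1,\ d=r-2\}$ (integer triples). *)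

(* Defs.v *)
From HB Require Import structures.
From mathcomp Require Import all_boot all_order all_algebra.
Set Implicit Arguments. Unset Strict Implicit. Unset Printing Implicit Defensive.
Import Order.TTheory GRing.Theory Num.Theory.
Local Open Scope ring_scope.

Definition triple := (int * int * int)%type.

Definition gval (p : nat) (t : triple) : rat :=
  let: (r, e, d) := t in
  ((r * e * d)%:~R - (d * (d + 1))%:~R / 2 * (p%:R - 1))
    / ((r * (r - 1))%:~R / 2).

Definition inU (p : nat) (t : triple) : Prop :=
  let: (r, e, d) := t in
  2 <= r /\ 1 <= e /\ 1 <= d /\ d <= p%:Z /\
      d * (p%:Z - 1) <= r * e /\ r * e <= r * (p%:Z - 1) /\
      0 < gval p t /\
      (if p != 2%N then (gval p t / 2) \is a Num.int
       else gval p t \is a Num.int).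

Definition inBplus (p : nat) (t : triple) : Prop :=
  let: (r, e, d) := t in
  [/\ 2 <= r, r <= p%:Z, e = p%:Z - 1 & d = r].

(* (p-1)/2 < e is read over the rationals (equivalently 2e > p-1). *)
Definition inB0 (p : nat) (t : triple) : Prop :=
  let: (r, e, d) := t in
  2 <= r /\ r <= p%:Z + 1 /\
      (p%:R - 1) / 2 < (e%:~R : rat) /\ e <= p%:Z - 1 /\
      r * (p%:Z - 1 - e) <= p%:Z - 1 /\ d = r - 1.

Definition inBminus (p : nat) (t : triple) : Prop :=
  let: (r, e, d) := t in
  [/\ 2 <= r,
      (p%:R - 1) / 2 < (e%:~R : rat), e <= p%:Z - 1,
      r * (p%:Z - 1 - e) = p%:Z - 1 & d = r - 2].

Definition inB (p : nat) (t : triple) : Prop :=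
  inBplus p t \/ inB0 p t \/ inBminus p t.

(* Main.v *)
Require Import Defs.
From HB Require Import structures.
From mathcomp Require Import all_boot all_order all_algebra.
From mathcomp Require Import zify ring lra.
Import Order.TTheory GRing.Theory Num.Theory.
Local Open Scope ring_scope.

Lemma nz_aux (r : int) : 2 <= r -> (r%:~R : rat) != 0 /\ (r%:~R : rat) - 1 != 0.
Proof.
move=> hr; split; first by rewrite intr_eq0; apply/eqP; lia.
have : ((r - 1)%:~R : rat) != 0 by rewrite intr_eq0; apply/eqP; lia.
by rewrite intrB.
Qed.

Lemma gval_r p (r : int) : 2 <= r -> gval p (r,p%:Z - 1,r) = p%:R - 1.
Proof.
move=> hr; have [h1 h2] := nz_aux _ hr; rewrite /gval !(intrM, intrD, intrB) /=.
rewrite (_ : (1%:~R : rat) = 1) // (_ : ((-1)%:~R : rat) = -1) //.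
rewrite -[((Posz p)%:~R : rat)]/(p%:R : rat).
move: (r%:~R : rat) (p%:R : rat) h1 h2 => R P h1 h2.
field. by rewrite h1 h2.
Qed.

Lemma gval_r1 p (r e : int) : 2 <= r -> gval p (r,e,r-1) = 2 * e%:~R - (p%:R - 1).
Proof.
move=> hr; have [h1 h2] := nz_aux _ hr; rewrite /gval !(intrM, intrD, intrB) /=.
rewrite (_ : (1%:~R : rat) = 1) // (_ : ((-1)%:~R : rat) = -1) //.
move: (r%:~R : rat) (e%:~R : rat) (p%:R : rat) h1 h2 => R E P h1 h2.
field. by rewrite h1 h2.
Qed.

Lemma odd_half p : odd p -> (p%:R : rat) = 2 * (p./2)%:R + 1.
Proof.
move=> ho; rewrite -{1}(odd_double_half p) ho natrD -mul2n natrM addrC.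
by [].
Qed.


Lemma int_plus p (r : int) : prime p -> 2 <= r ->
  (if p != 2%N then (gval p (r, p%:Z - 1, r) / 2) \is a Num.int
   else gval p (r, p%:Z - 1, r) \is a Num.int).
Proof.
move=> pp hr; rewrite gval_r //.
case: eqVneq => [->|hne] /=; first by rewrite (_ : (2%:R : rat) - 1 = 1%:R) ?natr_int //; lra.
have ho : odd p by case: (even_prime pp) => // h; move: hne; rewrite h eqxx.
rewrite (odd_half _ ho) (_ : (2 * (p./2)%:R + 1 - 1) / 2 = (p./2)%:R :> rat) ?natr_int //.
by field.
Qed.

Lemma int_zero p (r e : int) : prime p -> 2 <= r ->
  (if p != 2%N then (gval p (r, e, r - 1) / 2) \is a Num.int
   else gval p (r, e, r - 1) \is a Num.int).
Proof.
move=> pp hr; rewrite gval_r1 //.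
case: eqVneq => [->|hne] /=.
  by rewrite rpredB ?rpredM ?intr_int ?natr_int // rpredB ?natr_int // (_ : 1 = 1%:R) ?natr_int.
have ho : odd p by case: (even_prime pp) => // h; move: hne; rewrite h eqxx.
rewrite (odd_half _ ho) (_ : (2 * e%:~R - (2 * (p./2)%:R + 1 - 1)) / 2 = e%:~R - (p./2)%:R :> rat).
  by rewrite rpredB ?intr_int ?natr_int.
by field.
Qed.

Theorem lemma5 (p : nat) (hp : prime p) :
  (forall r e d : int, (inU p (r, e, d) /\ d = r) <-> inBplus p (r, e, d)) /\
  (forall r e d : int, (inU p (r, e, d) /\ d = r - 1) <-> inB0 p (r, e, d)) /\
  (forall r e d : int,
      (inU p (r, e, d) /\ r = 2) <-> (inB p (r, e, d) /\ r = 2)).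
Proof.
have p2 : (2 <= p)%N by apply: prime_gt1.
have P2 : 2 <= p%:Z by lia.
have Q2 : (2 : rat) <= p%:R by rewrite -[2%:R]/(2%:R : rat) ler_nat.
have partI : forall r e d : int, (inU p (r, e, d) /\ d = r) <-> inBplus p (r, e, d).
  move=> r e d; split.
    move=> [[hr [he [hd [hdp [h1 [h2 _]]]]]] hdr]; subst d.
    split => //; nia.
  case=> hr hrp -> ->; split => //.
  split => //; split; first lia; split; first lia; split => //; split; first lia.
  split; first lia.
  split; last exact: int_plus.
  rewrite gval_r //; lra.
have partII : forall r e d : int, (inU p (r, e, d) /\ d = r - 1) <-> inB0 p (r, e, d).
  move=> r e d; split.
    move=> [[hr [he [hd [hdp [h1 [h2 [hg _]]]]]]] hdr]; subst d.
    rewrite gval_r1 in hg; last by lia.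
    split; first lia. split; first lia. split; first lra.
    split; first nia. split; first nia. done.
  move=> [hr [hrp [hlt [hle [hm ->]]]]].
  have e0 : (0 : rat) < e%:~R by lra.
  rewrite ltr0z in e0.
  split => //.
  split; first lia; split; first lia; split; first lia; split; first lia.
  split; first nia; split; first nia.
  split; last exact: int_zero.
  rewrite gval_r1 //; lra.
split => //; split => //.
move=> r e d; split.
  move=> [hU hr2]; split => //.
  have hU' := hU; move: hU' => [_ [_ [hd [_ [h1 [h2 _]]]]]].
  have hd2 : d <= 2 by subst r; nia.
  have [d2|d1] : d = 2 \/ d = 1 by lia.
    by left; apply/partI; split => //; rewrite d2 hr2.
  by right; left; apply/partII; split => //; rewrite d1 hr2.
move=> [[hB|[hB|hB]] hr2]; split => //.
- by case: (proj2 (partI r e d) hB).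
- by case: (proj2 (partII r e d) hB).
- case: hB => _ hlt _ heq _.
  have h : 2 * e = p%:Z - 1 by subst r; lia.
  have := congr1 (fun z : int => (z%:~R : rat)) h.
  rewrite /= intrM intrB -[((Posz p)%:~R : rat)]/(p%:R : rat) => hq.
  rewrite (_ : (2%:~R : rat) = 2) // (_ : (1%:~R : rat) = 1) // in hq.
  have he : (e%:~R : rat) = (p%:R - 1) / 2 by rewrite -hq; field.
  by move: hlt; rewrite he ltxx.
Qed.
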